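(* Assume Assumption A. Let $\{\mathscr F_1,\dots,\mathscr F_{\mathfrak p},\Delta_{\mathscr F}\}$, $\mathfrak p\ge2$, be a partition of $E$ and $\beta^-_N,\beta_N$ positive sequences with $\beta^-_N/\beta_N\to0$ satisfying (H0)–(H3) with $(a_N,b_N)=(\beta^-_N,\beta_N)$. Let $X_{\mathscr F}$ be the Markov chain on $P=\{1,\dots,\mathfrak p\}$ with rates $r_{\mathscr F}(x,y)$ from (H1), $G_1,\dots,G_{\mathfrak q}$ its recurrent classes, $\mathscr G_a=\bigcup_{x\in G_a}\mathscr F_x$, $\breve{\mathscr G}_a=\bigcup_{b\ne a}\mathscr G_b$, assume $\mathfrak q>1$ and set $1/\beta^+_N=\sum_{a=1}^{\mathfrak q}\mathrm{Cap}_N(\mathscr G_a,\breve{\mathscr G}_a)/\mu_N(\mathscr G_a)$. Then $\lim_{N\to\infty}\beta_N/\beta^+_N=0$.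
   Context: Setting: $E$ is a fixed finite set. For each $N\ge1$, $(\eta^N_t)$ is a continuous-time irreducible Markov chain on $E$ with jump rates $R_N(\eta,\xi)$, holding rates $\lambda_N(\eta)=\sum_{\xi\neq\eta}R_N(\eta,\xi)$ and unique invariant probability $\mu_N$; $\mathbb P_\eta,\mathbb E_\eta$ law/expectation from $\eta$. $H_A=\inf\{t>0:\eta^N_t\in A\}$, $H^+_A=\inf\{t>\tau_1:\eta^N_t\in A\}$, $\tau_1$ first jump time; $\mathrm{Cap}_N(A,B)=\sum_{\eta\in A}\mu_N(\eta)\lambda_N(\eta)\mathbb P_\eta[H_B<H^+_A]$, $\mathrm{Cap}_N(\eta,\xi)=\mathrm{Cap}_N(\{\eta\},\{\xi\})$. The trace on nonempty $F\subset E$ is $\eta^F_t=\eta^N_{S_F(t)}$, $S_F(t)=\sup\{s:\int_0^s\mathbf 1\{\eta^N_r\in F\}dr\le t\}$, with jump rates $R^F_N$. Ordered families: a finite family of sequences of positive reals $(a^r_N)$, $r\in\mathfrak R$, is ordered if for all $r\neq s$, $\arctan(a^r_N/a^s_N)$ converges. Assumption A: (i) for each $\eta\neq\xi$, either $R_N(\eta,\xi)=0$ for all $N$ or $>0$ for all $N$; $\mathbb B$ is the set of pairs with positive rates; (ii) for every $m\ge1$ the family $\prod_{(\eta,\xi)\in\mathbb B}R_N(\eta,\xi)^{k(\eta,\xi)}$, $k:\mathbb B\to\mathbb Z_+$, $\sum k=m$, is ordered. Conditions for a partition $\{\mathscr F_1,\dots,\mathscr F_{\mathfrak p},\Delta_{\mathscr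 F}\}$ (independent of $N$) and $(a_N,b_N)$, with $\mathscr F=\bigcup_x\mathscr F_x$ and $r^{\mathscr F}_N(\mathscr F_x,\mathscr F_y)=\mu_N(\mathscr F_x)^{-1}\sum_{\eta\in\mathscr F_x}\mu_N(\eta)\sum_{\xi\in\mathscr F_y}R^{\mathscr F}_N(\eta,\xi)$: (H0) for each $x$, $\eta\in\mathscr F_x$, $\lim_N\mu_N(\eta)/\mu_N(\mathscr F_x)\in(0,1]$ exists; (H1) for $x\ne y$, $r_{\mathscr F}(x,y):=\lim_Nb_Nr^{\mathscr F}_N(\mathscr F_x,\mathscr F_y)\in[0,\infty)$ exists, and $\sum_x\sum_{y\ne x}r_{\mathscr F}(x,y)>0$; (H2) for $|\mathscr F_x|\ge2$, $\eta\ne\xi\in\mathscr F_x$: $\liminf_Na_N\mathrm{Cap}_N(\eta,\xi)/\mu_N(\mathscr F_x)>0$; (H3) for every $t>0$, $\lim_N\max_\eta\mathbb E_\eta[\int_0^t\mathbf 1\{\eta^N_{sb_N}\in\Delta_{\mathscr F}\}ds]=0$. *)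

(* Defs.v *)
From Stdlib Require Import Reals ClassicalEpsilon.
From mathcomp Require Import all_boot.

Set Implicit Arguments.
Unset Strict Implicit.
Unset Printing Implicit Defensive.

Open Scope R_scope.

Definition posb (x : R) : bool := if Rlt_dec 0 x then true else false.

(** limit of a real sequence (chosen by epsilon; meaningful when it converges) *)
Definition Lim (u : nat -> R) : R := epsilon (inhabits R0) (fun l : R => Un_cv u l).

Section Chain.
Variable E : finType.

(** [Rt x y] : jump rate from x to y (diagonal ignored). *)
Definition holding (Rt : E -> E -> R) (x : E) : R :=
  \big[Rplus/0]_(y | y != x) Rt x y.

Definition jumpP (Rt : E -> E -> R) (x y : E) : R :=
  if y == x then 0 else Rt x y / holding Rt x.

(** [hitn Rt A B n z] = P_z[ H_B < H_A and H_B <= n jumps ] (hitting times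
    counted from time 0, i.e. value 1 on B, 0 on A \ B). *)
Fixpoint hitn (Rt : E -> E -> R) (A B : {set E}) (n : nat) (z : E) : R :=
  if z \in B then 1 else if z \in A then 0 else
  match n with
  | O => 0
  | S m => \big[Rplus/0]_(y : E) (jumpP Rt z y * hitn Rt A B m y)
  end.

Definition hitp (Rt : E -> E -> R) (A B : {set E}) (z : E) : R :=
  Lim (fun n => hitn Rt A B n z).

(** Cap(A,B) = sum_{x in A} mu(x) lambda(x) P_x[H_B < H_A^+]
             = sum_{x in A} mu(x) sum_{y <> x} R(x,y) P_y[H_B < H_A] *)
Definition cap (Rt : E -> E -> R) (mu : E -> R) (A B : {set E}) : R :=
  \big[Rplus/0]_(x in A) (mu x * \big[Rplus/0]_(y | y != x) (Rt x y * hitp Rt A B y)).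

Definition muS (mu : E -> R) (A : {set E}) : R := \big[Rplus/0]_(x in A) mu x.

(** jump rates of the trace process on F (for x <> y in F):
    R^F(x,y) = lambda(x) P_x[ first return to F after the first jump is at y ] *)
Definition traceRate (Rt : E -> E -> R) (F : {set E}) (x y : E) : R :=
  \big[Rplus/0]_(z | z != x) (Rt x z * hitp Rt (F :\ y) [set y] z).

Definition rF (Rt : E -> E -> R) (mu : E -> R) (F Fx Fy : {set E}) : R :=
  / muS mu Fx * \big[Rplus/0]_(x in Fx) (mu x * \big[Rplus/0]_(y in Fy) traceRate Rt F x y).

Definition genL (Rt : E -> E -> R) (f : E -> R) (x : E) : R :=
  \big[Rplus/0]_(y | y != x) (Rt x y * (f y - f x)).

Definition indic (D : {set E}) (x : E) : R := if x \in D then 1 else 0.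

(** E_x[ int_0^t 1{eta_{s b} in D} ds ] = int_0^t (e^{s b L} 1_D)(x) ds
      = sum_k t^(k+1) b^k / (k+1)! (L^k 1_D)(x)   (Kolmogorov / semigroup formula) *)
Definition occ (Rt : E -> E -> R) (b t : R) (D : {set E}) (x : E) : R :=
  Lim (fun n => \big[Rplus/0]_(k < n)
        (t ^ k.+1 * b ^ k / INR (factorial k.+1) * iter k (genL Rt) (indic D) x)).

Definition irreducible (Rt : E -> E -> R) : Prop :=
  forall x y : E, connect (fun a b => (a != b) && posb (Rt a b)) x y.

Definition invariant_prob (Rt : E -> E -> R) (mu : E -> R) : Prop :=
  (forall x, 0 <= mu x) /\ \big[Rplus/0]_(x : E) mu x = 1 /\
  (forall y, \big[Rplus/0]_(x | x != y) (mu x * Rt x y) = mu y * holding Rt y).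

Definition assumpA_i (Rt : nat -> E -> E -> R) : Prop :=
  forall x y : E, x <> y ->
    (forall N, Rt N x y = 0) \/ (forall N, 0 < Rt N x y).

Definition monom (Rt : E -> E -> R) (k : E -> E -> nat) : R :=
  \big[Rmult/1]_(x : E) \big[Rmult/1]_(y | y != x) (Rt x y ^ k x y).

(** k : B -> Z_+ with sum m (extended by 0 outside B) *)
Definition admissible (Rt : nat -> E -> E -> R) (m : nat) (k : E -> E -> nat) : Prop :=
  (forall x y, k x y <> 0%nat -> x <> y /\ forall N, 0 < Rt N x y) /\
  (\sum_(x : E) \sum_(y : E) k x y)%N = m.

(** Assumption A (ii): the families of monomials of degree m are ordered *)
Definition assumpA_ii (Rt : nat -> E -> E -> R) : Prop :=
  forall m : nat, (1 <= m)%N ->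
  forall k k' : E -> E -> nat, admissible Rt m k -> admissible Rt m k' -> k <> k' ->
  exists l, Un_cv (fun N => atan (monom (Rt N) k / monom (Rt N) k')) l.

End Chain.

Section Reduced.
Variable p : nat.

Definition edgeP (r : 'I_p -> 'I_p -> R) : rel 'I_p :=
  fun x y => (x != y) && posb (r x y).

Definition recurrentb (r : 'I_p -> 'I_p -> R) (x : 'I_p) : bool :=
  [forall y, connect (edgeP r) x y ==> connect (edgeP r) y x].

Definition commClass (r : 'I_p -> 'I_p -> R) (x : 'I_p) : {set 'I_p} :=
  [set y | connect (edgeP r) x y && connect (edgeP r) y x].

Definition recClasses (r : 'I_p -> 'I_p -> R) : {set {set 'I_p}} :=
  [set commClass r x | x in [set x | recurrentb r x]].

Variable E : finType.

Definition GG (F : 'I_p -> {set E}) (C : {set 'I_p}) : {set E} :=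
  \bigcup_(x in C) F x.

Definition breveG (F : 'I_p -> {set E}) (r : 'I_p -> 'I_p -> R) (C : {set 'I_p}) : {set E} :=
  \bigcup_(C' in recClasses r | C' != C) GG F C'.

Definition is_partition (F : 'I_p -> {set E}) (Delta : {set E}) : Prop :=
  (forall x, F x != set0) /\
  (forall x y, x != y -> [disjoint F x & F y]) /\
  (forall x, [disjoint F x & Delta]) /\
  (\bigcup_x F x) :|: Delta = [set: E].

End Reduced.

(* Main.v *)
Require Import Defs.
From HB Require Import structures.
From Stdlib Require Import Reals ClassicalEpsilon.
From mathcomp Require Import all_boot.
Open Scope R_scope.
Set Warnings "-notation-overridden".

Lemma RplusA : associative Rplus. Proof. by move=> *; rewrite Rplus_assoc. Qed.
HB.instance Definition _ := Monoid.isComLaw.Build R 0 Rplus RplusA Rplus_comm Rplus_0_l.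

Lemma CV_const c : Un_cv (fun _ => c) c.
Proof. move=> e He; exists 0%nat => n _; rewrite /Rdist Rminus_diag Rabs_R0; exact: He. Qed.

Section Big.
Variable I : Type.

Lemma sum_le (r : seq I) (P : pred I) (f g : I -> R) :
  (forall i, P i -> f i <= g i) ->
  \big[Rplus/0]_(i <- r | P i) f i <= \big[Rplus/0]_(i <- r | P i) g i.
Proof.
move=> H; apply: (big_ind2 (fun a b => a <= b)) => //; first exact: Rle_refl.
by move=> *; apply: Rplus_le_compat.
Qed.

Lemma sum_ge0 (r : seq I) (P : pred I) (f : I -> R) :
  (forall i, P i -> 0 <= f i) -> 0 <= \big[Rplus/0]_(i <- r | P i) f i.
Proof.
move=> H; apply: (big_ind (fun a => 0 <= a)) => //; first exact: Rle_refl.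
by move=> a b ha hb; rewrite -(Rplus_0_l 0); apply: Rplus_le_compat.
Qed.

Lemma sum_distr (r : seq I) (P : pred I) (f : I -> R) c :
  c * \big[Rplus/0]_(i <- r | P i) f i = \big[Rplus/0]_(i <- r | P i) (c * f i).
Proof.
apply: (big_ind2 (fun a b => c * a = b)) => //; first by rewrite Rmult_0_r.
by move=> a b x y <- <-; rewrite Rmult_plus_distr_l.
Qed.

Lemma sum_distrl (r : seq I) (P : pred I) (f : I -> R) c :
  \big[Rplus/0]_(i <- r | P i) f i * c = \big[Rplus/0]_(i <- r | P i) (f i * c).
Proof.
rewrite Rmult_comm sum_distr; apply: eq_bigr => i _; exact: Rmult_comm.
Qed.

Lemma sum_cv (r : seq I) (P : pred I) (f : nat -> I -> R) (l : I -> R) :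
  (forall i, P i -> Un_cv (fun N => f N i) (l i)) ->
  Un_cv (fun N => \big[Rplus/0]_(i <- r | P i) f N i) (\big[Rplus/0]_(i <- r | P i) l i).
Proof.
move=> H; elim: r => [|a r IH].
  rewrite big_nil; apply: (Un_cv_ext (fun _ => 0)); first by move=> n; rewrite big_nil.
  exact: (CV_const 0).
rewrite big_cons; case Pa: (P a).
  apply: (Un_cv_ext (fun N => f N a + \big[Rplus/0]_(i <- r | P i) f N i)).
    by move=> n; rewrite big_cons Pa.
  by apply: CV_plus => //; apply: H.
by apply: (Un_cv_ext (fun N => \big[Rplus/0]_(i <- r | P i) f N i)) => // n; rewrite big_cons Pa.
Qed.
End Big.

Lemma Lim_cv u l : Un_cv u l -> Lim u = l.
Proof.
move=> H; apply: (UL_sequence u) => //; rewrite /Lim.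
by apply: epsilon_spec; exists l.
Qed.
Section Hit.
Variable E : finType.
Variable Rt : E -> E -> R.
Hypothesis Rt_ge0 : forall x y, 0 <= Rt x y.

Lemma holding_ge0 x : 0 <= holding Rt x.
Proof. by apply: sum_ge0. Qed.

Lemma inv_ge0 h : 0 <= h -> 0 <= / h.
Proof.
case/Rle_lt_or_eq_dec => [h0|<-]; first by left; apply: Rinv_0_lt_compat.
by rewrite Rinv_0; apply: Rle_refl.
Qed.

Lemma jumpP_ge0 x y : 0 <= jumpP Rt x y.
Proof.
rewrite /jumpP; case: (y == x); first exact: Rle_refl.
apply: Rmult_le_pos => //; apply: inv_ge0; exact: holding_ge0.
Qed.

Lemma sum_jumpP z : \big[Rplus/0]_(y : E) jumpP Rt z y <= 1.
Proof.
have -> : \big[Rplus/0]_(y : E) jumpP Rt z y = holding Rt z * / holding Rt z.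
  rewrite /jumpP; set h := holding Rt z.
  have -> : h = \big[Rplus/0]_(y : E) (if y != z then Rt z y else 0) by rewrite /h /holding big_mkcond.
  rewrite sum_distrl; apply: eq_bigr => y _.
  rewrite eq_sym; case: (z == y) => /=; first by rewrite Rmult_0_l.
  by [].
case: (Req_dec (holding Rt z) 0) => [->|h0].
  rewrite Rmult_0_l; left; exact: Rlt_0_1.
by rewrite Rinv_r //; apply: Rle_refl.
Qed.

Lemma hitn_ge0 A B n z : 0 <= hitn Rt A B n z.
Proof.
elim: n z => [|n IH] z /=.
  case: (z \in B); first by left; exact: Rlt_0_1.
  by case: (z \in A); apply: Rle_refl.
case: (z \in B); first by left; exact: Rlt_0_1.
case: (z \in A); first by apply: Rle_refl.
by apply: sum_ge0 => y _; apply: Rmult_le_pos; [apply: jumpP_ge0|apply: IH].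
Qed.

Lemma hitn_le1 A B n z : hitn Rt A B n z <= 1.
Proof.
elim: n z => [|n IH] z /=.
  case: (z \in B); first by apply: Rle_refl.
  by case: (z \in A); left; exact: Rlt_0_1.
case: (z \in B); first by apply: Rle_refl.
case: (z \in A); first by left; exact: Rlt_0_1.
apply: Rle_trans (sum_jumpP z).
apply: sum_le => y _; rewrite -{2}(Rmult_1_r (jumpP Rt z y)).
apply: Rmult_le_compat_l; [apply: jumpP_ge0|apply: IH].
Qed.

Lemma hitn_mono A B n z : hitn Rt A B n z <= hitn Rt A B n.+1 z.
Proof.
elim: n z => [|n IH] z.
  rewrite [X in X <= _]/= [X in _ <= X]/=.
  case: (z \in B); first by apply: Rle_refl.
  case: (z \in A); first by apply: Rle_refl.
  by apply: sum_ge0 => y _; apply: Rmult_le_pos; [apply: jumpP_ge0|exact: (hitn_ge0 A B 0 y)].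
rewrite [X in X <= _]/= [X in _ <= X]/=.
case: (z \in B); first by apply: Rle_refl.
case: (z \in A); first by apply: Rle_refl.
apply: sum_le => y _; apply: Rmult_le_compat_l; [apply: jumpP_ge0|apply: IH].
Qed.

Lemma hitp_cv A B z : Un_cv (fun n => hitn Rt A B n z) (hitp Rt A B z).
Proof.
have [l Hl] : {l | Un_cv (fun n => hitn Rt A B n z) l}.
  apply: growing_cv; first by move=> n; apply: hitn_mono.
  by exists 1 => x [n ->]; apply: hitn_le1.
by rewrite /hitp (Lim_cv _ _ Hl).
Qed.

Lemma hitp_ge0 A B z : 0 <= hitp Rt A B z.
Proof.
apply: (Rle_cv_lim _ (CV_const 0) (hitp_cv A B z)) => n; exact: hitn_ge0.
Qed.

End Hit.
Section Cmp.
Variable E : finType.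
Variable Rt : E -> E -> R.
Hypothesis Rt_ge0 : forall x y, 0 <= Rt x y.

Lemma hitn_B (A B : {set E}) (n : nat) (z : E) : z \in B -> hitn Rt A B n z = 1.
Proof. by case: n => [|n] /= ->. Qed.
Lemma hitn_A (A B : {set E}) (n : nat) (z : E) : z \notin B -> z \in A -> hitn Rt A B n z = 0.
Proof. by case: n => [|n] /= /negbTE -> ->. Qed.
Lemma hitn_0 (A B : {set E}) (z : E) : z \notin B -> z \notin A -> hitn Rt A B 0 z = 0.
Proof. by move=> /= /negbTE -> /negbTE ->. Qed.
Lemma hitn_S (A B : {set E}) (n : nat) (z : E) : z \notin B -> z \notin A ->
  hitn Rt A B n.+1 z = \big[Rplus/0]_(y : E) (jumpP Rt z y * hitn Rt A B n y).
Proof. by move=> /= /negbTE -> /negbTE ->. Qed.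

Variables (Fall A B : {set E}).
Hypothesis AF : A \subset Fall.
Hypothesis BS : B \subset Fall :\: A.

Lemma rhs_ge1 n z : z \in Fall :\: A ->
  1 <= \big[Rplus/0]_(y in Fall :\: A) hitn Rt (Fall :\ y) [set y] n z.
Proof.
move=> zS; rewrite (bigD1 z) //= hitn_B ?inE ?eqxx //.
rewrite -{1}(Rplus_0_r 1); apply: Rplus_le_compat_l.
by apply: sum_ge0 => y _; apply: hitn_ge0.
Qed.

Lemma rhs_ge0 n z :
  0 <= \big[Rplus/0]_(y in Fall :\: A) hitn Rt (Fall :\ y) [set y] n z.
Proof. by apply: sum_ge0 => y _; apply: hitn_ge0. Qed.

Lemma hitn_cmp n z : hitn Rt A B n z <=
  \big[Rplus/0]_(y in Fall :\: A) hitn Rt (Fall :\ y) [set y] n z.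
Proof.
elim: n z => [|n IH] z.
  case zB: (z \in B).
    rewrite hitn_B //; apply: rhs_ge1; exact: (subsetP BS).
  case zA: (z \in A); first by rewrite hitn_A ?zB //; apply: rhs_ge0.
  by rewrite hitn_0 ?zB ?zA //; apply: rhs_ge0.
case zB: (z \in B).
  rewrite hitn_B //; apply: rhs_ge1; exact: (subsetP BS).
case zA: (z \in A); first by rewrite hitn_A ?zB //; apply: rhs_ge0.
case zF: (z \in Fall).
  apply: (Rle_trans _ 1); first exact: hitn_le1.
  apply: rhs_ge1.
  by rewrite inE zA zF.
rewrite hitn_S ?zB ?zA //.
rewrite [X in _ <= X](eq_bigr (fun y => \big[Rplus/0]_(w : E) (jumpP Rt z w * hitn Rt (Fall :\ y) [set y] n w))); last first.
  move=> y yS; rewrite hitn_S //.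
    rewrite inE; apply/eqP => zy; by move: yS; rewrite -zy inE zF andbF.

  by rewrite !inE zF andbF.
rewrite exchange_big /=; apply: sum_le => w _; rewrite -sum_distr.
by apply: Rmult_le_compat_l; [apply: jumpP_ge0|apply: IH].
Qed.

Lemma hitp_cmp z : hitp Rt A B z <=
  \big[Rplus/0]_(y in Fall :\: A) hitp Rt (Fall :\ y) [set y] z.
Proof.
apply: (Rle_cv_lim _ (@hitp_cv E Rt Rt_ge0 A B z)).
  2: apply: (@sum_cv E _ _ (fun n y => hitn Rt (Fall :\ y) [set y] n z)) => y _; exact: hitp_cv.
move=> n /=; exact: hitn_cmp.
Qed.
End Cmp.
Lemma cover_le (T I : finType) (D : {set T}) (Q : pred I) (G : I -> {set T}) (h : T -> R) :
  (forall x, 0 <= h x) -> (forall x, x \in D -> exists2 i, Q i & x \in G i) ->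
  \big[Rplus/0]_(x in D) h x <= \big[Rplus/0]_(i | Q i) \big[Rplus/0]_(x in G i) h x.
Proof.
move=> h0 cov.
rewrite (eq_bigr (fun i => \big[Rplus/0]_(x : T) (if x \in G i then h x else 0)));
  last by move=> i _; rewrite big_mkcond.
rewrite exchange_big /= big_mkcond /=; apply: sum_le => x _.
case xD: (x \in D).
  have [i Qi xG] := cov x xD.
  rewrite (bigD1 i) //= xG -{1}(Rplus_0_r (h x)); apply: Rplus_le_compat_l.
  by apply: sum_ge0 => j _; case: (x \in G j) => //; apply: Rle_refl.
by apply: sum_ge0 => j _; case: (x \in G j) => //; apply: Rle_refl.
Qed.

Lemma subset_le (T : finType) (X Y : {set T}) (m : T -> R) :
  (forall x, 0 <= m x) -> X \subset Y ->
  \big[Rplus/0]_(x in X) m x <= \big[Rplus/0]_(x in Y) m x.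
Proof.
move=> m0 XY; rewrite big_mkcond [X in _ <= X]big_mkcond /=; apply: sum_le => x _.
case xX: (x \in X); first by rewrite (subsetP XY x xX); apply: Rle_refl.
by case: (x \in Y) => //; apply: Rle_refl.
Qed.

Lemma term_le_sum (T : finType) (X : {set T}) (m : T -> R) x :
  (forall x, 0 <= m x) -> x \in X -> m x <= \big[Rplus/0]_(x in X) m x.
Proof.
move=> m0 xX; rewrite (bigD1 x) //= -{1}(Rplus_0_r (m x)); apply: Rplus_le_compat_l.
by apply: sum_ge0.
Qed.

Section Main.
Variable E : finType.
Variable Rt : E -> E -> R.
Hypothesis Rt_ge0 : forall x y, 0 <= Rt x y.
Variable m : E -> R.
Hypothesis m0 : forall x, 0 <= m x.

Lemma traceRate_ge0 (Fall : {set E}) x y : 0 <= traceRate Rt Fall x y.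
Proof.
apply: sum_ge0 => z _; apply: Rmult_le_pos => //; exact: hitp_ge0.
Qed.

Lemma muS_ge0 (X : {set E}) : 0 <= muS m X.
Proof. exact: sum_ge0. Qed.

Lemma rF_ge0 (Fall X Y : {set E}) : 0 <= rF Rt m Fall X Y.
Proof.
apply: Rmult_le_pos; first by apply: inv_ge0; apply: muS_ge0.
apply: sum_ge0 => x _; apply: Rmult_le_pos => //; apply: sum_ge0 => y _.
exact: traceRate_ge0.
Qed.

Lemma rF_eq (Fall X Y : {set E}) :
  \big[Rplus/0]_(x in X) (m x * \big[Rplus/0]_(y in Y) traceRate Rt Fall x y)
  = muS m X * rF Rt m Fall X Y.
Proof.
rewrite /rF; case: (Req_dec (muS m X) 0) => [h|h].
  rewrite h Rmult_0_l big1 // => x xX.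
  have : m x <= 0 by rewrite -h; apply: term_le_sum.
  move=> hx; have -> : m x = 0 by apply: Rle_antisym.
  by rewrite Rmult_0_l.
by rewrite -Rmult_assoc Rinv_r // Rmult_1_l.
Qed.

Lemma cap_bound (Fall A B : {set E}) : B \subset Fall :\: A ->
  cap Rt m A B <= \big[Rplus/0]_(x in A)
     (m x * \big[Rplus/0]_(y in Fall :\: A) traceRate Rt Fall x y).
Proof.
move=> BS; apply: sum_le => x _; apply: Rmult_le_compat_l => //.
rewrite /traceRate exchange_big /=.
apply: sum_le => z _; rewrite -sum_distr; apply: Rmult_le_compat_l => //.
exact: hitp_cmp.
Qed.
End Main.
Section Class.
Variable E : finType.
Variable Rt : E -> E -> R.
Hypothesis Rt_ge0 : forall x y, 0 <= Rt x y.
Variable m : E -> R.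
Hypothesis m0 : forall x, 0 <= m x.
Variable p : nat.
Variable F : 'I_p -> {set E}.

Lemma class_bound (C : {set 'I_p}) (B : {set E}) :
  B \subset (\bigcup_z F z) :\: GG F C ->
  cap Rt m (GG F C) B / muS m (GG F C) <=
  \big[Rplus/0]_(x' in C) \big[Rplus/0]_(y' | y' \notin C)
     rF Rt m (\bigcup_z F z) (F x') (F y').
Proof.
set Fall := \bigcup_z F z; set A := GG F C; move=> BS.
set S := \big[Rplus/0]_(x' in C) _.
have S0 : 0 <= S.
  by apply: sum_ge0 => x' _; apply: sum_ge0 => y' _; exact: (@rF_ge0 E Rt Rt_ge0 m m0).
have key : cap Rt m A B <= muS m A * S.
  apply: (Rle_trans _ _ _ (@cap_bound E Rt Rt_ge0 m m0 _ _ _ BS)).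
  apply: (Rle_trans _ (\big[Rplus/0]_(x in A) (m x *
      \big[Rplus/0]_(y' | y' \notin C) \big[Rplus/0]_(y in F y') traceRate Rt Fall x y))).
    apply: sum_le => x _; apply: Rmult_le_compat_l => //.
    apply: cover_le => [y|y]; first exact: (@traceRate_ge0 E Rt Rt_ge0).
    rewrite inE => /andP [yA yF]; have [y' _ yy'] := bigcupP yF.
    exists y' => //; apply/negP => y'C; move/negP: yA; apply.
    by apply/bigcupP; exists y'.
  apply: (Rle_trans _ (\big[Rplus/0]_(x' in C) \big[Rplus/0]_(x in F x') (m x *
      \big[Rplus/0]_(y' | y' \notin C) \big[Rplus/0]_(y in F y') traceRate Rt Fall x y))).
    apply: cover_le => [x|x xA]; last exact/bigcupP.
    apply: Rmult_le_pos => //; apply: sum_ge0 => y' _; apply: sum_ge0 => y _.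
    exact: (@traceRate_ge0 E Rt Rt_ge0).
  rewrite /S sum_distr; apply: sum_le => x' x'C.
  rewrite sum_distr.
  rewrite (eq_bigr (fun x => \big[Rplus/0]_(y' | y' \notin C) (m x *
      \big[Rplus/0]_(y in F y') traceRate Rt Fall x y))); last by move=> x _; rewrite sum_distr.
  rewrite exchange_big /=; apply: sum_le => y' _.
  rewrite (@rF_eq E Rt m m0); apply: Rmult_le_compat_r; first exact: (@rF_ge0 E Rt Rt_ge0 m m0).
  apply: subset_le => //; exact: bigcup_sup.
rewrite /Rdiv; case: (Req_dec (muS m A) 0) => [h|h].
  by rewrite h Rinv_0 Rmult_0_r.
apply: (Rle_trans _ (muS m A * S * / muS m A)).
  apply: Rmult_le_compat_r => //; apply: inv_ge0; exact: (@muS_ge0 E m m0).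
rewrite (Rmult_comm (muS m A)) Rmult_assoc Rinv_r // Rmult_1_r; exact: Rle_refl.
Qed.
End Class.
Lemma squeeze (t u : nat -> R) :
  (forall N, 0 <= t N <= u N) -> Un_cv u 0 -> Un_cv t 0.
Proof.
move=> H Hu e He; have [N0 HN] := Hu e He; exists N0 => n hn.
have := HN n hn; rewrite /Rdist !Rminus_0_r => h.
have [h1 h2] := H n.
rewrite Rabs_right; last by apply: Rle_ge.
rewrite Rabs_right in h; last by apply: Rle_ge; apply: Rle_trans h2.
exact: Rle_lt_trans h2 h.
Qed.

Lemma sum_cv0 (I : Type) (r : seq I) (P : pred I) (f : nat -> I -> R) :
  (forall i, P i -> Un_cv (fun N => f N i) 0) ->
  Un_cv (fun N => \big[Rplus/0]_(i <- r | P i) f N i) 0.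
Proof.
move=> H; have := @sum_cv I r P f (fun _ => 0) H.
by rewrite big1.
Qed.

Section Classes.
Variable p : nat.
Variable r : 'I_p -> 'I_p -> R.

Lemma class_disj C C' z : C \in recClasses r -> C' \in recClasses r ->
  z \in C -> z \in C' -> C = C'.
Proof.
case/imsetP => x0 _ ->; case/imsetP => x1 _ ->.
rewrite !inE => /andP [a b] /andP [c d].
apply/setP => w; rewrite !inE.
apply/andP/andP => [[h1 h2]|[h1 h2]]; split.
- exact: connect_trans (connect_trans c b) h1.
- exact: connect_trans h2 (connect_trans a d).
- exact: connect_trans (connect_trans a d) h1.
- exact: connect_trans h2 (connect_trans c b).
Qed.

Lemma r_zero C x' y' : C \in recClasses r -> x' \in C -> y' \notin C ->
  0 <= r x' y' -> r x' y' = 0.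
Proof.
case/imsetP => x0; rewrite inE => rx0 -> x'C y'C r0.
case/Rle_lt_or_eq_dec: r0 => [rpos|//].
exfalso.
have nxy : x' != y' by apply/eqP => exy; move: y'C; rewrite -exy x'C.
move: x'C; rewrite !inE => /andP [c0x cx0].
have e : edgeP r x' y'.
  by rewrite /edgeP nxy /posb; case: (Rlt_dec 0 (r x' y')).
have c0y : connect (edgeP r) x0 y' := connect_trans c0x (connect1 e).
move/forallP: rx0 => /(_ y') /implyP /(_ c0y) cy0.
by move: y'C; rewrite inE c0y cy0.
Qed.
End Classes.
Lemma breve_sub (E : finType) (p : nat) (F : 'I_p -> {set E}) (r : 'I_p -> 'I_p -> R)
  (C : {set 'I_p}) :
  (forall x y, x != y -> [disjoint F x & F y]) -> C \in recClasses r ->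
  breveG F r C \subset (\bigcup_z F z) :\: GG F C.
Proof.
move=> Hd HC; apply/subsetP => y /bigcupP [C' /andP [HC' nC] /bigcupP [y'' y''C yy'']].
rewrite inE; apply/andP; split; last by apply/bigcupP; exists y''.
apply/bigcupP => [[x'' x''C yx'']].
case: (eqVneq x'' y'') => [exy|nxy].
  move/negP: nC; apply; apply/eqP; symmetry.
  by apply: (@class_disj _ r _ _ _ HC HC' x''C); rewrite exy.
have := disjoint_setI0 (Hd _ _ nxy) => h.
have : y \in F x'' :&: F y'' by rewrite inE yx'' yy''.
by rewrite h inE.
Qed.

Theorem mainTheorem19 (E : finType) (Rt : nat -> E -> E -> R) (mu : nat -> E -> R)
  (p : nat) (F : 'I_p -> {set E}) (Delta : {set E})
  (bm b : nat -> R) (r : 'I_p -> 'I_p -> R) :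
  (forall N x y, 0 <= Rt N x y) ->
  (forall N, irreducible (Rt N)) ->
  (forall N, invariant_prob (Rt N) (mu N)) ->
  assumpA_i Rt -> assumpA_ii Rt ->
  (2 <= p)%N ->
  is_partition F Delta ->
  (forall N, 0 < bm N) -> (forall N, 0 < b N) ->
  Un_cv (fun N => bm N / b N) 0 ->
  (forall x eta, eta \in F x ->
     exists l, 0 < l <= 1 /\ Un_cv (fun N => mu N eta / muS (mu N) (F x)) l) ->
  (forall x y, x != y ->
     0 <= r x y /\
     Un_cv (fun N => b N * rF (Rt N) (mu N) (\bigcup_z F z) (F x) (F y)) (r x y)) ->
  0 < \big[Rplus/0]_(x : 'I_p) \big[Rplus/0]_(y | y != x) r x y ->
  (forall x, (2 <= #|F x|)%N ->
     forall eta xi, eta \in F x -> xi \in F x -> eta != xi ->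
     exists c, 0 < c /\ exists N0, forall N, (N0 <= N)%N ->
       c <= bm N * cap (Rt N) (mu N) [set eta] [set xi] / muS (mu N) (F x)) ->
  (forall t, 0 < t ->
     Un_cv (fun N => \big[Rmax/0]_(eta : E) occ (Rt N) (b N) t Delta eta) 0) ->
  (1 < #|recClasses r|)%N ->
  Un_cv (fun N => b N *
     \big[Rplus/0]_(C in recClasses r)
        (cap (Rt N) (mu N) (GG F C) (breveG F r C) / muS (mu N) (GG F C))) 0.
Proof.
move=> Rge0 _ Hinv _ _ _ [_ [Hd _]] _ bpos _ _ H1 _ _ _ _.
have m0 N x : 0 <= mu N x by have [h _] := Hinv N; exact: h.
apply: (@squeeze _ (fun N => \big[Rplus/0]_(C in recClasses r)
   \big[Rplus/0]_(x' in C) \big[Rplus/0]_(y' | y' \notin C)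
      (b N * rF (Rt N) (mu N) (\bigcup_z F z) (F x') (F y')))).
  move=> N; split.
    apply: Rmult_le_pos; first by left.
    apply: sum_ge0 => C _; apply: Rmult_le_pos.
      apply: sum_ge0 => x _; apply: Rmult_le_pos => //; apply: sum_ge0 => y _.
      apply: Rmult_le_pos => //; exact: hitp_ge0.
    by apply: inv_ge0; apply: muS_ge0.
  rewrite sum_distr; apply: sum_le => C HC.
  apply: (Rle_trans _ (b N * \big[Rplus/0]_(x' in C) \big[Rplus/0]_(y' | y' \notin C)
      rF (Rt N) (mu N) (\bigcup_z F z) (F x') (F y'))).
    apply: Rmult_le_compat_l; first by left.
    apply: class_bound => //; exact: breve_sub.
  rewrite sum_distr; apply: sum_le => x' _; rewrite sum_distr; exact: Rle_refl.
apply: sum_cv0 => C HC; apply: sum_cv0 => x' x'C; apply: sum_cv0 => y' y'C.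
have nxy : x' != y' by apply/eqP => exy; move: y'C; rewrite -exy x'C.
have [r0 cv] := H1 x' y' nxy.
by rewrite -(@r_zero _ r _ _ _ HC x'C y'C r0).
Qed.
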